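(* Suppose $L\ge 1$ and the eigenvalues $\lambda_1(\operatorname{cov}(\boldsymbol{f})),\dots,\lambda_L(\operatorname{cov}(\boldsymbol{f}))$ are distinct. Then the D-GCCA common-source vectors $\boldsymbol{c}_1,\dots,\boldsymbol{c}_K$ (defined in the context) do not depend on the (non-unique) choice of the orthonormal bases $\boldsymbol{f}_1,\dots,\boldsymbol{f}_K$ nor on the choice of the eigenvectors $\{\boldsymbol{\eta}^{(\ell)}\}_{1\le\ell\le L}$. (Note that the eigenvalues of $\operatorname{cov}(\boldsymbol f)$ themselves do not depend on the choice of the bases.)
   Context: $\mathcal{L}_0^2$ is the space of real-valued random variables with zero mean and finite variance with the covariance as inner product; $\perp$ means zero covariance, $\|x\|=\sqrt{\operatorname{var}(x)}$, $\theta(x,y)$ is the angle with $\cos\theta(x,y)=\operatorname{corr}(x,y)$, $\operatorname{corr}(x,0)=0$. $K\ge2$; $\boldsymbol{x}_k\in\mathbb{R}^{p_k}$ ($k\le K$) are random vectors with entries in $\mathcal{L}_0^2$, $r_k=\dim\operatorname{span}(\boldsymbol{x}_k^\top)\ge1$ (span of the entries), $r_f=\dim\sum_k\operatorname{span}(\boldsymbol{x}_k^\top)$. D-GCCA construction: choose $\boldsymbol{f}_k\in\mathbb{R}^{r_k}$ whose entries form an orthonormal basis of $\operatorname{span}(\boldsymbol{x}_k^\top)$, $\boldsymbol{f}=(\boldsymbol{f}_1^\top,\dots,\boldsymbol{f}_K^\top)^\top$, and orthonormal eigenvectors $\boldsymbol{\eta}^{(\ell)}=((\boldsymbol{\eta}^{(\ell)}_1)^\top,\dots,(\boldsymbol{\eta}^{(\ell)}_K)^\top)^\top$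 ($\boldsymbol\eta^{(\ell)}_k\in\mathbb{R}^{r_k}$) of $\operatorname{cov}(\boldsymbol{f})$ for its $\ell$th largest eigenvalue $\lambda_\ell(\operatorname{cov}(\boldsymbol f))$, $\ell\le r_f$. Set $w^{(\ell)}=\lambda_\ell(\operatorname{cov}(\boldsymbol f))^{-1/2}(\boldsymbol{\eta}^{(\ell)})^\top\boldsymbol{f}$, and $z_k^{(\ell)}=(\boldsymbol{\eta}_k^{(\ell)}/\|\boldsymbol{\eta}_k^{(\ell)}\|_F)^\top\boldsymbol{f}_k$ if $\boldsymbol\eta^{(\ell)}_k\ne\boldsymbol0$ and $z_k^{(\ell)}=0$ otherwise. $\alpha^{(\ell)}$ is the real number such that, with $c^{(\ell)}=\alpha^{(\ell)}w^{(\ell)}$ and $d_k^{(\ell)}=z_k^{(\ell)}-c^{(\ell)}$, $|\alpha^{(\ell)}|$ is the smallest value of $|\alpha|$ for which at least one pair $j\ne k$ has $d^{(\ell)}_j\perp d^{(\ell)}_k$, and $\alpha^{(\ell)}<0$ if there are two such values (such $\alpha^{(\ell)}$ always exists). Let $L=\max\{\ell\le r_f:\lambda_\ell(\operatorname{cov}(\boldsymbol f))>1\}$, $\mathcal{I}_0=\{\ell\le L:\alpha^{(\ell)}\neq 0\}$, $\boldsymbol{z}_k^{\mathcal{I}_0}=(z_k^{(\ell)})^\top_{\ell\in\mathcal{I}_0}$, $\boldsymbol{c}^{\mathcal{I}_0}=(c^{(\ell)})^\top_{\ell\in\mathcal{I}_0}$ (increasing order of $\ell$). The common-source vector is $\boldsymbol{c}_k=\operatorname{cov}(\boldsymbol{x}_k,\boldsymbol{z}_k^{\mathcal{I}_0})\{\operatorname{cov}(\boldsymbol{z}_k^{\mathcal{I}_0})\}^{\dagger}\boldsymbol{c}^{\mathcal{I}_0}$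 if $\mathcal{I}_0\ne\emptyset$ and $\boldsymbol{c}_k=\boldsymbol{0}$ otherwise, where $\dagger$ is the Moore–Penrose pseudoinverse and $\operatorname{cov}(\boldsymbol u,\boldsymbol v)$ is the matrix with $(i,j)$ entry $\operatorname{cov}(u_i,v_j)$. *)

(* Defs.v *)
(* Random variables in L^2_0 are modelled abstractly as the
   elements of a real vector space V equipped with a covariance form cov that
   is bilinear, symmetric and positive definite (L^2_0 modulo a.s. equality). *)
From HB Require Import structures.
From mathcomp Require Import all_boot all_order all_algebra.
From Stdlib Require Import ClassicalEpsilon.
Unset Printing Implicit Defensive.
Import Order.TTheory GRing.Theory Num.Theory.
Local Open Scope ring_scope.

(* length of the stacked vector f = (f_1^T, ..., f_K^T)^T *)
Definition Ntot {K : nat} (r : 'I_K -> nat) : nat := \sum_(k < K) r k.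

Section DGCCA.
Context {R : rcfType} {V : lmodType R} (cov : V -> V -> R).

Definition inner_product : Prop :=
  [/\ forall (a : R) (u v w : V), cov (a *: u + v) w = a * cov u w + cov v w,
      forall u v : V, cov u v = cov v u,
      forall u : V, 0 <= cov u u
    & forall u : V, cov u u = 0 -> u = 0].

Definition in_span {n : nat} (s : 'I_n -> V) (v : V) : Prop :=
  exists a : 'I_n -> R, v = \sum_(i < n) a i *: s i.

Context {K : nat} {p : 'I_K -> nat} (x : forall k : 'I_K, 'I_(p k) -> V).
Context {r : 'I_K -> nat}.

Definition onb_choice (f : forall k : 'I_K, 'I_(r k) -> V) : Prop :=
  forall k : 'I_K,
    [/\ forall j, in_span (x k) (f k j),
        forall i, in_span (f k) (x k i)
      & forall i j, cov (f k i) (f k j) = (i == j)%:R].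


Context (f : forall k : 'I_K, 'I_(r k) -> V).

(* eta l : the l-th eigenvector (0-based index), split into blocks eta l k;
   lam l : the corresponding eigenvalue.  A full orthonormal eigenbasis of
   cov(f) with eigenvalues listed in nonincreasing order, so that
   lam l = lambda_{l+1}(cov f). *)
Definition eig_choice (eta : 'I_(Ntot r) -> forall k : 'I_K, 'I_(r k) -> R)
  (lam : 'I_(Ntot r) -> R) : Prop :=
  [/\ forall l m : 'I_(Ntot r),
        \sum_(k < K) \sum_(i < r k) eta l k i * eta m k i = (l == m)%:R,
      forall (l : 'I_(Ntot r)) (k : 'I_K) (i : 'I_(r k)),
        \sum_(j < K) \sum_(i' < r j) cov (f k i) (f j i') * eta l j i'
          = lam l * eta l k i
    & forall l m : 'I_(Ntot r), (l <= m)%N -> lam m <= lam l].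

(* L = number of eigenvalues > 1 (= max{l : lambda_l > 1} as they are sorted) *)
Definition Lnum (lam : 'I_(Ntot r) -> R) : nat := #|[set l : 'I_(Ntot r) | 1 < lam l]|.

Context (eta : 'I_(Ntot r) -> forall k : 'I_K, 'I_(r k) -> R) (lam : 'I_(Ntot r) -> R).

Definition wvar (l : 'I_(Ntot r)) : V :=
  (Num.sqrt (lam l))^-1 *: \sum_(k < K) \sum_(i < r k) eta l k i *: f k i.

Definition eta_norm (l : 'I_(Ntot r)) (k : 'I_K) : R :=
  Num.sqrt (\sum_(i < r k) eta l k i ^+ 2).

Definition zvar (l : 'I_(Ntot r)) (k : 'I_K) : V :=
  if [exists i, eta l k i != 0]
  then (eta_norm l k)^-1 *: \sum_(i < r k) eta l k i *: f k i
  else 0.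

Definition alpha_good (l : 'I_(Ntot r)) (a : R) : Prop :=
  exists j k : 'I_K, j != k /\
    cov (zvar l j - a *: wvar l) (zvar l k - a *: wvar l) = 0.

Definition alpha_spec (l : 'I_(Ntot r)) (a : R) : Prop :=
  [/\ alpha_good l a,
      forall b, alpha_good l b -> `|a| <= `|b|
    & forall b, alpha_good l b -> `|b| = `|a| -> a <= b].

Definition alpha (l : 'I_(Ntot r)) : R :=
  epsilon (inhabits 0) (alpha_spec l).

Definition cvar (l : 'I_(Ntot r)) : V := alpha l *: wvar l.

(* I_0 = { l <= L : alpha^(l) <> 0 } (0-based indices l < L) *)
Definition I0 : {set 'I_(Ntot r)} :=
  [set l : 'I_(Ntot r) | (l < Lnum lam)%N && (alpha l != 0)].

End DGCCA.

Definition is_MP {R : rcfType} {m n : nat} (A : 'M[R]_(m, n)) (B : 'M[R]_(n, m)) : Prop :=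
  [/\ A *m B *m A = A, B *m A *m B = B,
      (A *m B)^T = A *m B & (B *m A)^T = B *m A].

Definition mp_pinv {R : rcfType} {m n : nat} (A : 'M[R]_(m, n)) : 'M[R]_(n, m) :=
  epsilon (inhabits 0) (is_MP A).

(* The common-source vector c_k (as a p_k-vector of random variables):
   c_k = cov(x_k, z_k^{I0}) {cov(z_k^{I0})}^† c^{I0}, where I0 is enumerated in
   increasing order of l (enum_val), and c_k = 0 if I0 is empty. *)
Definition dgcca_c {R : rcfType} {V : lmodType R} (cov : V -> V -> R)
  {K : nat} {p : 'I_K -> nat} (x : forall k : 'I_K, 'I_(p k) -> V)
  {r : 'I_K -> nat} (f : forall k : 'I_K, 'I_(r k) -> V)
  (eta : 'I_(Ntot r) -> forall k : 'I_K, 'I_(r k) -> R) (lam : 'I_(Ntot r) -> R)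
  {k : 'I_K} (i : 'I_(p k)) : V :=
  let S := I0 cov f eta lam in
  let e := fun a : 'I_#|S| => enum_val a in
  let z := fun l => zvar f eta l k in
  let G : 'M[R]_#|S| := \matrix_(a, b) cov (z (e a)) (z (e b)) in
  let P := mp_pinv G in
  if #|S| == 0%N then 0 else
  \sum_(a < #|S|) \sum_(b < #|S|)
     (cov (x k i) (z (e a)) * P a b) *: cvar cov f eta lam (e b).

(* Main.v *)
Require Import Defs.
From HB Require Import structures.
From mathcomp Require Import all_boot all_order all_algebra.
From mathcomp.algebra_tactics Require Import ring lra.
From Stdlib Require Import ClassicalEpsilon FunctionalExtensionality PropExtensionality.
Import Order.TTheory GRing.Theory Num.Theory.
Local Open Scope ring_scope.
Set Implicit Arguments. Unset Strict Implicit.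
Local Open Scope ring_scope.

Section Complete.
Variables (R : rcfType) (K : nat) (r : 'I_K -> nat).
Definition bv := forall k : 'I_K, 'I_(r k) -> R.
Definition dot (a b : bv) : R := \sum_(k < K) \sum_(i < r k) a k i * b k i.
Definition TT := {k : 'I_K & 'I_(r k)}.

Lemma sumTT (F : bv) : \sum_(k < K) \sum_(i < r k) F k i = \sum_(t : TT) F (tag t) (tagged t).
Proof. by rewrite (sig_big_dep xpredT (fun _ _ => true) (fun k (i : 'I_(r k)) => F k i)). Qed.

Lemma cardTT : #|{: TT}| = Ntot r.
Proof.
rewrite -sum1_card /Ntot.
rewrite -(sig_big_dep (op := addn) xpredT (fun _ _ => true) (fun k (i : 'I_(r k)) => 1%N)).
by apply: eq_bigr => k _; rewrite sum1_card card_ord.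
Qed.

Lemma sum_cast n m (h : n = m) (G : 'I_m -> R) :
  \sum_(a < n) G (cast_ord h a) = \sum_(l < m) G l.
Proof. by subst; apply: eq_bigr => a _; rewrite cast_ord_id. Qed.

Lemma sum_enum (G : TT -> R) : \sum_(b < #|{: TT}|) G (enum_val b) = \sum_(t : TT) G t.
Proof. by rewrite (reindex (@enum_val TT predT)) //; apply: onW_bij; apply: enum_val_bij. Qed.

Lemma complete (E : 'I_(Ntot r) -> bv) :
  (forall l m, dot (E l) (E m) = (l == m)%:R) ->
  forall (v : bv) k i, \sum_l dot v (E l) * E l k i = v k i.
Proof.
move=> Horth v k i.
pose n := #|{: TT}|.
pose ET l (t : TT) := E l (tag t) (tagged t).
pose M : 'M[R]_n := \matrix_(a, b) ET (cast_ord cardTT a) (enum_val b).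
have MMt : M *m M^T = 1%:M.
  apply/matrixP => a a'; rewrite !mxE.
  rewrite (eq_bigr (fun b => ET (cast_ord cardTT a) (enum_val b) * ET (cast_ord cardTT a') (enum_val b))); last by move=> b _; rewrite !mxE.
  rewrite (sum_enum (fun t => ET (cast_ord cardTT a) t * ET (cast_ord cardTT a') t)).
  rewrite -(sumTT (fun k i => E _ k i * E _ k i)) -/(dot (E _) (E _)) Horth.
  by congr ((_ : bool)%:R); apply/eqP/eqP => [/cast_ord_inj|->].
have MtM := mulmx1C MMt.
have key : forall b b' : 'I_n, \sum_l ET l (enum_val b) * ET l (enum_val b') = (b == b')%:R.
  move=> b b'; move/matrixP: MtM => /(_ b b'); rewrite !mxE => <-.
  rewrite -(sum_cast cardTT (fun l => ET l (enum_val b) * ET l (enum_val b'))).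
  by apply: eq_bigr => a _; rewrite !mxE.
set t0 : TT := Tagged (fun k => 'I_(r k)) i.
change (\sum_l dot v (E l) * ET l t0 = v (tag t0) (tagged t0)).
rewrite -(enum_rankK t0); set b := enum_rank t0.
under eq_bigr do rewrite /dot sumTT -(sum_enum (fun t => v (tag t) (tagged t) * ET _ t)) mulr_suml.
rewrite exchange_big /=.
under eq_bigr do under eq_bigr do rewrite -mulrA.
under eq_bigr do rewrite -mulr_sumr key.
rewrite (bigD1 b) //= eqxx mulr1 big1 ?addr0 // => b' /negbTE ->; by rewrite mulr0.
Qed.

Lemma parseval (E : 'I_(Ntot r) -> bv) :
  (forall l m, dot (E l) (E m) = (l == m)%:R) ->
  forall (v : bv), dot v v = \sum_l dot v (E l) ^+ 2.
Proof.
move=> Horth v.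
transitivity (\sum_(k < K) \sum_(i < r k) \sum_l dot v (E l) * E l k i * v k i).
  apply: eq_bigr => k _; apply: eq_bigr => i _.
  by rewrite -mulr_suml (complete Horth).
under eq_bigr do rewrite exchange_big /=.
rewrite exchange_big /=; apply: eq_bigr => l _.
rewrite expr2 [X in _ = _ * X]/dot mulr_sumr; apply: eq_bigr => k _; rewrite mulr_sumr.
by apply: eq_bigr => i _; rewrite -mulrA (mulrC (E l k i)).
Qed.
End Complete.
Set Implicit Arguments. Unset Strict Implicit.
Local Open Scope ring_scope.

Section Sort.
Variables (R : rcfType) (N : nat).

Lemma card_prefix j : (j <= N)%N -> #|[set l : 'I_N | (l < j)%N]| = j.
Proof.
move=> hj.
have -> : [set l : 'I_N | (l < j)%N] = (widen_ord hj) @: [set: 'I_j].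
  apply/setP => l; rewrite inE; apply/idP/imsetP => [lj|[a _ ->]] //=.
  by exists (Ordinal lj); rewrite ?inE //; apply: val_inj.
by rewrite card_imset ?cardsT ?card_ord //; by move=> a b /(congr1 val) /= /val_inj.
Qed.

Variable lam : 'I_N -> R.
Hypothesis Hs : forall l m : 'I_N, (l <= m)%N -> lam m <= lam l.

Lemma sorted_gt t (i : 'I_N) : (t < lam i) = (i < #|[set l : 'I_N | (t < lam l)%R]|)%N.
Proof.
apply/idP/idP => [ti|].
  have sub : [set l : 'I_N | (l < i.+1)%N] \subset [set l : 'I_N | t < lam l].
    apply/subsetP => l; rewrite !inE ltnS => li.
    by apply: lt_le_trans ti (Hs li).
  by have := subset_leq_card sub; rewrite card_prefix.
move=> H; rewrite ltNge; apply/negP => ti.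
have sub : [set l | t < lam l] \subset [set l : 'I_N | (l < i)%N].
  apply/subsetP => l; rewrite !inE; apply: contraTT; rewrite -leqNgt -leNgt => il.
  by apply: le_trans (Hs il) ti.
have := subset_leq_card sub; rewrite (card_prefix (ltnW (ltn_ord i))).
by rewrite leqNgt H.
Qed.
End Sort.

Section Count.
Variables (R : rcfType) (N : nat).

Lemma half_count (c : 'I_N -> 'I_N -> R) (lam1 lam2 : 'I_N -> R) t :
  (forall m, \sum_l c m l ^+ 2 = 1) ->
  (forall m l, c m l != 0 -> lam2 m = lam1 l) ->
  \sum_(m in [set m : 'I_N | t < lam2 m]) \sum_(l in [set l : 'I_N | t < lam1 l]) c m l ^+ 2
   = (#|[set m : 'I_N | t < lam2 m]|)%:R.
Proof.
move=> Hrow Hsup.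
rewrite -sumr_const; apply: eq_bigr => m; rewrite inE => tm.
rewrite -(Hrow m) [RHS](bigID (fun l => l \in [set l : 'I_N | t < lam1 l])) /=.
rewrite [X in _ = _ + X]big1 ?addr0 // => l; rewrite inE => tl.
by apply/eqP; rewrite sqrf_eq0; apply: contraNT tl => /Hsup <-.
Qed.

Lemma count_eq (c : 'I_N -> 'I_N -> R) (lam1 lam2 : 'I_N -> R) t :
  (forall m, \sum_l c m l ^+ 2 = 1) ->
  (forall l, \sum_m c m l ^+ 2 = 1) ->
  (forall m l, c m l != 0 -> lam2 m = lam1 l) ->
  #|[set l : 'I_N | t < lam1 l]| = #|[set m : 'I_N | t < lam2 m]|.
Proof.
move=> Hr Hc Hs; apply/eqP; rewrite -(eqr_nat R).
have Hs' : forall l m, (fun l m => c m l) l m != 0 -> lam1 l = lam2 m.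
  by move=> l m /Hs ->.
rewrite -(half_count (c := fun l m => c m l) t Hc Hs') -(half_count t Hr Hs).
by rewrite exchange_big.
Qed.

Lemma lam_eq (lam1 lam2 : 'I_N -> R) :
  (forall l m : 'I_N, (l <= m)%N -> lam1 m <= lam1 l) ->
  (forall l m : 'I_N, (l <= m)%N -> lam2 m <= lam2 l) ->
  (forall t, #|[set l : 'I_N | t < lam1 l]| = #|[set m : 'I_N | t < lam2 m]|) ->
  forall i, lam1 i = lam2 i.
Proof.
move=> H1 H2 Hc i.
have E t : (t < lam1 i) = (t < lam2 i) by rewrite (sorted_gt H1) (sorted_gt H2) Hc.
apply/eqP; rewrite eq_le !leNgt -E ltxx E ltxx //.
Qed.
End Count.
Set Implicit Arguments. Unset Strict Implicit.
Local Open Scope ring_scope.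

Section MP.
Variable R : rcfType.

Lemma rV_sq0 n (u : 'rV[R]_n) : u *m u^T = 0 -> u = 0.
Proof.
move=> /matrixP /(_ 0 0); rewrite !mxE => H.
have Hj : forall j, true -> u 0 j * u 0 j = 0.
  apply: psumr_eq0P => [j _|]; first by rewrite -expr2 sqr_ge0.
  by rewrite -[RHS]H; apply: eq_bigr => j _; rewrite [u^T j 0]mxE.
apply/matrixP => i j; rewrite [i]ord1 mxE.
by move: (Hj j isT) => /eqP; rewrite mulf_eq0 orbb => /eqP.
Qed.

Lemma gram_unit m n (C : 'M[R]_(m, n)) : row_free C -> C *m C^T \in unitmx.
Proof.
move=> Cf; rewrite -row_free_unit; apply: inj_row_free => v Hv.
have : (v *m C) *m (v *m C)^T = 0.
  by rewrite trmx_mul !mulmxA -(mulmxA v) Hv mul0mx.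
move/rV_sq0 => /eqP; rewrite mulmx_free_eq0 //; by move/eqP.
Qed.

Lemma MP_exists_fact m r n (C : 'M[R]_(m, r)) (F : 'M[R]_(r, n)) :
  row_free C^T -> row_free F -> exists B, is_MP (C *m F) B.
Proof.
move=> CtF Ff.
have FF : F *m F^T \in unitmx by apply: gram_unit.
have CC' : C^T *m C^T^T \in unitmx by apply: gram_unit.
rewrite trmxK in CC'.
set P := invmx (F *m F^T); set Q := invmx (C^T *m C).
have PT : P^T = P by rewrite /P trmx_inv trmx_mul trmxK.
have QT : Q^T = Q by rewrite /Q trmx_inv trmx_mul trmxK.
have HP : F *m F^T *m P = 1%:M by rewrite mulmxV.
have HQ : Q *m (C^T *m C) = 1%:M by rewrite mulVmx.
exists (F^T *m P *m Q *m C^T).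
have e1 : forall p (X : 'M_(p, r)), X *m F *m F^T *m P = X.
  by move=> p X; rewrite -(mulmxA X F) -(mulmxA X) HP mulmx1.
have e3 : forall p (X : 'M_(p, r)), X *m Q *m C^T *m C = X.
  by move=> p X; rewrite -(mulmxA X) -(mulmxA X) -(mulmxA Q) HQ mulmx1.
have AB : (C *m F) *m (F^T *m P *m Q *m C^T) = C *m Q *m C^T.
  by rewrite !mulmxA e1.
have BA : (F^T *m P *m Q *m C^T) *m (C *m F) = F^T *m P *m F.
  by rewrite !mulmxA e3.
split.
- by rewrite AB !mulmxA e3.
- by rewrite BA !mulmxA e1.
- by rewrite AB !trmx_mul trmxK QT mulmxA.
- by rewrite BA !trmx_mul trmxK PT mulmxA.
Qed.

Lemma MP_exists m n (A : 'M[R]_(m, n)) : exists B, is_MP A B.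
Proof.
rewrite -(mulmx_base A); apply: MP_exists_fact; last exact: row_base_free.
by rewrite /row_free mxrank_tr; apply: col_base_full.
Qed.

Lemma MP_unique m n (A : 'M[R]_(m, n)) B1 B2 : is_MP A B1 -> is_MP A B2 -> B1 = B2.
Proof.
case=> [a1 b1 c1 d1] [a2 b2 c2 d2].
have X1 : B1 = B1 *m B1^T *m A^T by rewrite -mulmxA -trmx_mul c1 mulmxA b1.
have T2 : A^T = A^T *m (A *m B2) by rewrite -{1}a2 trmx_mul c2.
have E1 : B1 = B1 *m A *m B2 by rewrite {1}X1 T2 !mulmxA -X1.
have Y2 : B2 = A^T *m (B2^T *m B2) by rewrite mulmxA -trmx_mul d2 b2.
have T1 : A^T = B1 *m A *m A^T by rewrite -{1}a1 -mulmxA trmx_mul d1.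
have E2 : B2 = B1 *m A *m B2 by rewrite {1}Y2 T1 -!mulmxA -Y2 mulmxA.
by rewrite E1 -E2.
Qed.

Lemma mp_pinv_spec m n (A : 'M[R]_(m, n)) : is_MP A (mp_pinv A).
Proof. by rewrite /mp_pinv; apply: epsilon_spec; apply: MP_exists. Qed.

Lemma mp_pinv_conj m n (A : 'M[R]_(m, n)) (D1 : 'M[R]_m) (D2 : 'M[R]_n) :
  D1^T = D1 -> D2^T = D2 -> D1 *m D1 = 1%:M -> D2 *m D2 = 1%:M ->
  mp_pinv (D1 *m A *m D2) = D2 *m mp_pinv A *m D1.
Proof.
move=> t1 t2 s1 s2; apply: (MP_unique (mp_pinv_spec (D1 *m A *m D2))).
case: (mp_pinv_spec A); set B := mp_pinv A => a b c d.
have k1 : forall p (X : 'M_(p, m)), X *m D1 *m D1 = X by move=> p X; rewrite -mulmxA s1 mulmx1.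
have k2 : forall p (X : 'M_(p, n)), X *m D2 *m D2 = X by move=> p X; rewrite -mulmxA s2 mulmx1.
have aX : forall p (X : 'M_(p, m)), X *m A *m B *m A = X *m A.
  by move=> p X; rewrite -(mulmxA X) -(mulmxA X) a.
have bX : forall p (X : 'M_(p, n)), X *m B *m A *m B = X *m B.
  by move=> p X; rewrite -(mulmxA X) -(mulmxA X) b.
split.
- by rewrite !mulmxA k2 k1 aX.
- by rewrite !mulmxA k1 k2 bX.
- by rewrite !mulmxA k2 -(mulmxA D1 A B) trmx_mul trmx_mul t1 c !mulmxA.
- by rewrite !mulmxA k1 -(mulmxA D2 B A) trmx_mul trmx_mul t2 d !mulmxA.
Qed.
End MP.
Set Implicit Arguments. Unset Strict Implicit.
Local Open Scope ring_scope.

Section Cov.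
Variables (R : rcfType) (V : lmodType R) (cov : V -> V -> R).
Hypothesis Hcov : inner_product cov.

Lemma covC u v : cov u v = cov v u. Proof. by case: Hcov. Qed.
Lemma cov0l w : cov 0 w = 0.
Proof.
case: Hcov => H _ _ _; have := H 1 0 0 w; rewrite scale1r addr0 mul1r => E.
lra.
Qed.
Lemma covDl u v w : cov (u + v) w = cov u w + cov v w.
Proof. by case: Hcov => H _ _ _; rewrite -[u]scale1r H mul1r scale1r. Qed.
Lemma covZl a u w : cov (a *: u) w = a * cov u w.
Proof. by case: Hcov => H _ _ _; rewrite -[a *: u]addr0 H cov0l addr0. Qed.
Lemma covNl u w : cov (- u) w = - cov u w.
Proof. by rewrite -scaleN1r covZl mulN1r. Qed.
Lemma covBl u v w : cov (u - v) w = cov u w - cov v w.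
Proof. by rewrite covDl covNl. Qed.
Lemma cov_suml (I : finType) (P : pred I) (F : I -> V) w :
  cov (\sum_(i | P i) F i) w = \sum_(i | P i) cov (F i) w.
Proof. exact: (big_morph (fun v => cov v w) (fun u v => covDl u v w) (cov0l w)). Qed.
Lemma covZr a u w : cov w (a *: u) = a * cov w u.
Proof. by rewrite covC covZl covC. Qed.
Lemma covBr u v w : cov w (u - v) = cov w u - cov w v.
Proof. by rewrite covC covBl !(covC w). Qed.
Lemma cov_sumr (I : finType) (P : pred I) (F : I -> V) w :
  cov w (\sum_(i | P i) F i) = \sum_(i | P i) cov w (F i).
Proof. by rewrite covC cov_suml; apply: eq_bigr => i _; rewrite covC. Qed.

Lemma sum_delta n (a : 'I_n -> R) j : \sum_i a i * (i == j)%:R = a j.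
Proof.
rewrite (bigD1 j) //= eqxx mulr1 big1 ?addr0 // => i /negbTE ->; by rewrite mulr0.
Qed.

Lemma span_expand n (s : 'I_n -> V) v :
  (forall i j, cov (s i) (s j) = (i == j)%:R) -> in_span s v ->
  v = \sum_j cov v (s j) *: s j.
Proof.
move=> Ho [a ->]; apply: eq_bigr => j _; congr (_ *: _).
rewrite cov_suml -{1}(sum_delta a j); apply: eq_bigr => i _; by rewrite covZl Ho.
Qed.

Lemma span_trans n m (s : 'I_n -> V) (t : 'I_m -> V) v :
  (forall i j, cov (t i) (t j) = (i == j)%:R) ->
  in_span s v -> (forall i, in_span t (s i)) -> in_span t v.
Proof.
move=> Ho [a ->] Hs.
exists (fun j => \sum_i a i * cov (s i) (t j)).
under eq_bigr => i _ do rewrite (span_expand Ho (Hs i)) scaler_sumr.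
rewrite exchange_big /=; apply: eq_bigr => j _.
by rewrite scaler_suml; apply: eq_bigr => i _; rewrite scalerA.
Qed.

Variables (K : nat) (r : 'I_K -> nat).

Definition Uv (f : forall k : 'I_K, 'I_(r k) -> V) (e : bv R r) : V :=
  \sum_(k < K) \sum_(i < r k) e k i *: f k i.

Lemma covUl f e w : cov (Uv f e) w = \sum_k \sum_i e k i * cov (f k i) w.
Proof.
rewrite cov_suml; apply: eq_bigr => k _; rewrite cov_suml.
by apply: eq_bigr => i _; rewrite covZl.
Qed.

Lemma covUr f e w : cov w (Uv f e) = \sum_k \sum_i e k i * cov w (f k i).
Proof. by rewrite covC covUl; do 2 (apply: eq_bigr => ? _); rewrite covC. Qed.

Lemma UvZ f (c : R) e : Uv f (fun k i => c * e k i) = c *: Uv f e.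
Proof.
rewrite /Uv scaler_sumr; apply: eq_bigr => k _; rewrite scaler_sumr.
by apply: eq_bigr => i _; rewrite scalerA.
Qed.

Lemma eig_form f eta lam : eig_choice cov f eta lam ->
  forall l k i, cov (f k i) (Uv f (eta l)) = lam l * eta l k i.
Proof.
case=> _ H _ l k i; rewrite -H covUr; apply: eq_bigr => j _.
by apply: eq_bigr => i' _; rewrite mulrC.
Qed.

Lemma cov_eig f (b : bv R r) (mu : R) :
  (forall k i, cov (f k i) (Uv f b) = mu * b k i) ->
  forall a, cov (Uv f a) (Uv f b) = mu * dot a b.
Proof.
move=> H a; rewrite covUl /dot mulr_sumr; apply: eq_bigr => k _.
rewrite mulr_sumr; apply: eq_bigr => i _; rewrite H; ring.
Qed.

End Cov.
Set Strict Implicit.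
Unset Implicit Arguments.
Local Open Scope ring_scope.

Section Trans.
Variables (R : rcfType) (V : lmodType R) (cov : V -> V -> R).
Hypothesis Hcov : inner_product cov.
Variables (K : nat) (p : 'I_K -> nat) (x : forall k : 'I_K, 'I_(p k) -> V).
Variables (r : 'I_K -> nat) (f1 f2 : forall k : 'I_K, 'I_(r k) -> V).
Hypotheses (Hf1 : onb_choice cov x f1) (Hf2 : onb_choice cov x f2).

Definition Q (k : 'I_K) (i j : 'I_(r k)) : R := cov (f2 k i) (f1 k j).
Definition trv (e : bv R r) : bv R r := fun k j => \sum_i e k i * Q k i j.

Lemma F21 k i : f2 k i = \sum_j Q k i j *: f1 k j.
Proof.
case: (Hf1 k) => _ H1 O1; case: (Hf2 k) => H2 _ _.
exact: (span_expand Hcov (O1) (span_trans Hcov O1 (H2 i) H1)).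
Qed.

Lemma F12 k j : f1 k j = \sum_i Q k i j *: f2 k i.
Proof.
case: (Hf2 k) => _ H2 O2; case: (Hf1 k) => H1 _ _.
rewrite {1}(span_expand Hcov (O2) (span_trans Hcov O2 (H1 j) H2)).
by apply: eq_bigr => i _; rewrite /Q (covC Hcov).
Qed.

Lemma QQt k (i i' : 'I_(r k)) : \sum_j Q k i j * Q k i' j = (i == i')%:R.
Proof.
case: (Hf2 k) => _ _ O2; case: (Hf1 k) => _ _ O1.
rewrite -O2 (F21 k i') (cov_sumr Hcov); apply: eq_bigr => j _.
by rewrite (covZr Hcov) mulrC.
Qed.

Lemma blk (e : bv R r) k : \sum_i e k i *: f2 k i = \sum_j trv e k j *: f1 k j.
Proof.
under eq_bigr do rewrite F21 scaler_sumr.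
rewrite exchange_big /=; apply: eq_bigr => j _.
by rewrite /trv scaler_suml; apply: eq_bigr => i _; rewrite scalerA.
Qed.

Lemma Utr e : Uv f2 e = Uv f1 (trv e).
Proof. by apply: eq_bigr => k _; rewrite blk. Qed.

Lemma blkdot (a b : bv R r) k :
  \sum_j trv a k j * trv b k j = \sum_i a k i * b k i.
Proof.
rewrite /trv.
under eq_bigr do rewrite mulr_suml.
rewrite exchange_big /=; apply: eq_bigr => i _.
transitivity (\sum_i' a k i * b k i' * \sum_j Q k i j * Q k i' j).
  under eq_bigr do rewrite mulr_sumr.
  rewrite exchange_big /=; apply: eq_bigr => j _.
  rewrite mulr_sumr; apply: eq_bigr => i' _; ring.
under eq_bigr do rewrite QQt.
under eq_bigr do rewrite eq_sym.
exact: (sum_delta (fun i0 => a k i * b k i0)).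
Qed.

Lemma dot_tr a b : dot (trv a) (trv b) = dot a b.
Proof. by apply: eq_bigr => k _; rewrite blkdot. Qed.

Lemma eig_tr (e : bv R r) mu :
  (forall k i, cov (f2 k i) (Uv f2 e) = mu * e k i) ->
  forall k j, cov (f1 k j) (Uv f1 (trv e)) = mu * trv e k j.
Proof.
move=> H k j; rewrite -Utr F12 (cov_suml Hcov) /trv mulr_sumr.
by apply: eq_bigr => i _; rewrite (covZl Hcov) H; ring.
Qed.
End Trans.
Arguments Q : default implicits.
Arguments trv : default implicits.
Arguments F21 : default implicits.
Arguments F12 : default implicits.
Arguments QQt : default implicits.
Arguments blk : default implicits.
Arguments Utr : default implicits.
Arguments blkdot : default implicits.
Arguments dot_tr : default implicits.
Arguments eig_tr : default implicits.
Unset Implicit Arguments.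
Local Open Scope ring_scope.

Section Spec.
Variables (R : rcfType) (V : lmodType R) (cov : V -> V -> R).
Hypothesis Hcov : inner_product cov.
Variables (K : nat) (p : 'I_K -> nat) (x : forall k : 'I_K, 'I_(p k) -> V).
Variables (r : 'I_K -> nat) (f1 f2 : forall k : 'I_K, 'I_(r k) -> V).
Hypotheses (Hf1 : onb_choice cov x f1) (Hf2 : onb_choice cov x f2).
Variables (eta1 eta2 : 'I_(Ntot r) -> forall k : 'I_K, 'I_(r k) -> R)
  (lam1 lam2 : 'I_(Ntot r) -> R).
Hypotheses (He1 : eig_choice cov f1 eta1 lam1) (He2 : eig_choice cov f2 eta2 lam2).
Hypothesis Hdist : forall l m : 'I_(Ntot r), (l < Lnum lam1)%N -> (m < Lnum lam1)%N ->
             l != m -> lam1 l != lam1 m.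

Definition eta2' l : bv R r := trv _ cov f1 f2 (eta2 l).

Lemma dotC (a b : bv R r) : dot a b = dot b a.
Proof. by apply: eq_bigr => k _; apply: eq_bigr => i _; rewrite mulrC. Qed.

Lemma o1 l m : dot (eta1 l) (eta1 m) = (l == m)%:R.
Proof. by case: He1 => H _ _; apply: H. Qed.

Lemma o2 l m : dot (eta2' l) (eta2' m) = (l == m)%:R.
Proof. rewrite /eta2' (dot_tr Hcov Hf1 Hf2); by case: He2 => H _ _; apply: H. Qed.

Lemma ev1 l k i : cov (f1 k i) (Uv f1 (eta1 l)) = lam1 l * eta1 l k i.
Proof. exact: (eig_form Hcov He1). Qed.

Lemma ev2 l k i : cov (f1 k i) (Uv f1 (eta2' l)) = lam2 l * eta2' l k i.
Proof. exact: (eig_tr Hcov Hf1 Hf2 (eta2 l) (lam2 l) (eig_form Hcov He2 l)). Qed.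

Definition cc m l := dot (eta2' m) (eta1 l).

Lemma supp m l : cc m l != 0 -> lam2 m = lam1 l.
Proof.
move=> nz.
have E1 := cov_eig Hcov (ev1 l) (eta2' m).
have E2 := cov_eig Hcov (ev2 m) (eta1 l).
rewrite (covC Hcov) E2 dotC in E1.
have : (lam2 m - lam1 l) * cc m l = 0 by rewrite /cc mulrBl E1 subrr.
by move/eqP; rewrite mulf_eq0 (negbTE nz) orbF subr_eq0 => /eqP.
Qed.

Lemma rows m : \sum_l cc m l ^+ 2 = 1.
Proof. by rewrite /cc -(parseval o1) o2 eqxx. Qed.

Lemma cols l : \sum_m cc m l ^+ 2 = 1.
Proof.
rewrite /cc; under eq_bigr do rewrite dotC.
by rewrite -(parseval o2) o1 eqxx.
Qed.

Lemma lamE l : lam1 l = lam2 l.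
Proof.
apply: lam_eq; [by case: He1|by case: He2|] => t.
exact: (count_eq t rows cols supp).
Qed.

Definition ss l := cc l l.

Section Small.
Variable l : 'I_(Ntot r).
Hypothesis Hl : (l < Lnum lam1)%N.

Lemma onlyl m : cc l m != 0 -> m = l.
Proof.
move/supp; rewrite -lamE => E.
case: (ltnP m (Lnum lam1)) => Hm.
  case: (eqVneq m l) => [//|ne]; have := Hdist l m Hl Hm; rewrite eq_sym ne E eqxx; by move=> /(_ isT).
have S1 : (1 < lam1 l) by rewrite (sorted_gt (lam := lam1)) //; case: He1.
have S2 : ~~ (1 < lam1 m) by rewrite (sorted_gt (lam := lam1)) -?leqNgt //; case: He1.
by rewrite -E S1 in S2.
Qed.

Lemma ss2 : ss l ^+ 2 = 1.
Proof.
rewrite -(rows l) (bigD1 l) //= big1 ?addr0 // => m ml.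
by apply/eqP; rewrite sqrf_eq0; apply: contraNT ml => /onlyl ->.
Qed.

Lemma eta2E k i : eta2' l k i = ss l * eta1 l k i.
Proof.
rewrite -(complete o1 (eta2' l)) (bigD1 l) //= big1 ?addr0 // => m ml.
rewrite -/(cc l m); case: (eqVneq (cc l m) 0) => [->|/onlyl E]; first by rewrite mul0r.
by rewrite E eqxx in ml.
Qed.
End Small.
End Spec.
Arguments eta2' : default implicits.
Arguments cc : default implicits.
Arguments ss : default implicits.
Arguments lamE : default implicits.
Arguments ss2 : default implicits.
Arguments eta2E : default implicits.
Arguments o1 : default implicits.
Unset Implicit Arguments.
Local Open Scope ring_scope.

Lemma ex_nz (R : rcfType) n (e : 'I_n -> R) : [exists i, e i != 0] = (\sum_i e i ^+ 2 != 0).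
Proof.
apply/idP/idP => [/existsP [i ni]|H].
  apply: contra ni => /eqP H; have /(_ i isT) := psumr_eq0P (fun j _ => sqr_ge0 (e j)) H.
  by move/eqP; rewrite sqrf_eq0.
apply: contraNT H => /existsPn Hn; apply/eqP; rewrite big1 // => i _.
by move/negPn: (Hn i) => /eqP ->; rewrite expr0n.
Qed.

Lemma Uv_ext (R : rcfType) (V : lmodType R) K (r : 'I_K -> nat) (f : forall k : 'I_K, 'I_(r k) -> V) (e e' : bv R r) :
  (forall k i, e k i = e' k i) -> Uv f e = Uv f e'.
Proof. by move=> H; apply: eq_bigr => k _; apply: eq_bigr => i _; rewrite H. Qed.

Section Rel.
Variables (R : rcfType) (V : lmodType R) (cov : V -> V -> R).
Hypothesis Hcov : inner_product cov.
Variables (K : nat) (p : 'I_K -> nat) (x : forall k : 'I_K, 'I_(p k) -> V).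
Variables (r : 'I_K -> nat) (f1 f2 : forall k : 'I_K, 'I_(r k) -> V).
Hypotheses (Hf1 : onb_choice cov x f1) (Hf2 : onb_choice cov x f2).
Variables (eta1 eta2 : 'I_(Ntot r) -> forall k : 'I_K, 'I_(r k) -> R)
  (lam1 lam2 : 'I_(Ntot r) -> R).
Hypotheses (He1 : eig_choice cov f1 eta1 lam1) (He2 : eig_choice cov f2 eta2 lam2).
Hypothesis Hdist : forall l m : 'I_(Ntot r), (l < Lnum lam1)%N -> (m < Lnum lam1)%N ->
             l != m -> lam1 l != lam1 m.

Let s l := ss V cov f1 f2 eta1 eta2 l.

Lemma Elam : lam2 = lam1.
Proof. by apply: functional_extensionality => l; rewrite (lamE Hcov Hf1 Hf2 He1 He2). Qed.

Section Small.
Variable l : 'I_(Ntot r).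
Hypothesis Hl : (l < Lnum lam1)%N.

Lemma wE : wvar f2 eta2 lam2 l = s l *: wvar f1 eta1 lam1 l.
Proof.
rewrite /wvar -/(Uv f2 (eta2 l)) -/(Uv f1 (eta1 l)) Elam (Utr Hcov Hf1 Hf2).
rewrite (Uv_ext _ _ _ _ f1 (trv _ cov f1 f2 (eta2 l)) (fun k i => s l * eta1 l k i)); last first.
  by move=> k i; apply: (eta2E Hcov Hf1 Hf2 He1 He2 Hdist l Hl).
by rewrite (UvZ f1 (s l) (eta1 l)) !scalerA mulrC.
Qed.

Lemma zE k : zvar f2 eta2 l k = s l *: zvar f1 eta1 l k.
Proof.
have sq2 : \sum_i eta2 l k i ^+ 2 = \sum_i eta1 l k i ^+ 2.
  transitivity (\sum_i eta2 l k i * eta2 l k i); first by apply: eq_bigr => i _; rewrite expr2.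
  rewrite -(blkdot Hcov Hf1 Hf2 (eta2 l) (eta2 l) k).
  under eq_bigr do rewrite -/(eta2' V cov f1 f2 eta2 l k _) (eta2E Hcov Hf1 Hf2 He1 He2 Hdist l Hl).
  rewrite -[RHS]mul1r -(ss2 Hcov Hf1 Hf2 He1 He2 Hdist l Hl) mulr_sumr.
  by apply: eq_bigr => i _; rewrite /s; ring.
rewrite /zvar !ex_nz sq2 /eta_norm sq2; case: ifP => _; last by rewrite scaler0.
rewrite (blk Hcov Hf1 Hf2 (eta2 l) k).
have E2 : forall j, trv V cov f1 f2 (eta2 l) k j = s l * eta1 l k j by move=> j; exact: (eta2E Hcov Hf1 Hf2 He1 He2 Hdist l Hl).
rewrite (eq_bigr (fun j => s l *: (eta1 l k j *: f1 k j))); last by move=> j _; rewrite scalerA -E2.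
by rewrite -scaler_sumr !scalerA mulrC.
Qed.

Lemma goodE : alpha_good cov f2 eta2 lam2 l = alpha_good cov f1 eta1 lam1 l.
Proof.
apply: functional_extensionality => a; apply: propositional_extensionality.
rewrite /alpha_good wE.
have key : forall j k, cov (zvar f2 eta2 l j - a *: (s l *: wvar f1 eta1 lam1 l))
     (zvar f2 eta2 l k - a *: (s l *: wvar f1 eta1 lam1 l)) =
   cov (zvar f1 eta1 l j - a *: wvar f1 eta1 lam1 l) (zvar f1 eta1 l k - a *: wvar f1 eta1 lam1 l).
  move=> j k; rewrite !zE !scalerA (mulrC a) -!scalerA -!scalerBr.
  rewrite (covZl Hcov) (covZr Hcov) mulrA -expr2 (ss2 Hcov Hf1 Hf2 He1 He2 Hdist l Hl) mul1r //.
by split => -[j [k [jk H]]]; exists j, k; split => //; rewrite ?key // -key.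
Qed.

Lemma alphaE : alpha cov f2 eta2 lam2 l = alpha cov f1 eta1 lam1 l.
Proof. by rewrite /alpha /alpha_spec goodE. Qed.

Lemma cvarE : cvar cov f2 eta2 lam2 l = s l *: cvar cov f1 eta1 lam1 l.
Proof. by rewrite /cvar alphaE wE /wvar !scalerA (mulrC (alpha _ _ _ _ _)). Qed.
End Small.

Lemma I0E : I0 cov f2 eta2 lam2 = I0 cov f1 eta1 lam1.
Proof.
apply/setP => l; rewrite !inE.
case: (ltnP l (Lnum lam1)) => h; last by rewrite Elam ltnNge h.
by rewrite alphaE // Elam h.
Qed.
End Rel.
Arguments Elam : default implicits.
Arguments zE : default implicits.
Arguments cvarE : default implicits.
Arguments I0E : default implicits.
Local Open Scope ring_scope.

Theorem theorem4 (R : rcfType) (V : lmodType R) (cov : V -> V -> R)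
  (Hcov : inner_product cov)
  (K : nat) (HK : (2 <= K)%N)
  (p : 'I_K -> nat) (x : forall k : 'I_K, 'I_(p k) -> V)
  (r : 'I_K -> nat) (Hr : forall k, (0 < r k)%N)
  (f1 f2 : forall k : 'I_K, 'I_(r k) -> V)
  (Hf1 : onb_choice cov x f1) (Hf2 : onb_choice cov x f2)
  (eta1 eta2 : 'I_(Ntot r) -> forall k : 'I_K, 'I_(r k) -> R)
  (lam1 lam2 : 'I_(Ntot r) -> R)
  (He1 : eig_choice cov f1 eta1 lam1) (He2 : eig_choice cov f2 eta2 lam2)
  (HL : (1 <= Lnum lam1)%N)
  (Hdist : forall l m : 'I_(Ntot r), (l < Lnum lam1)%N -> (m < Lnum lam1)%N ->
             l != m -> lam1 l != lam1 m) :
  forall (k : 'I_K) (i : 'I_(p k)),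
    dgcca_c cov x f1 eta1 lam1 i = dgcca_c cov x f2 eta2 lam2 i.
Proof.
move=> k i; rewrite /dgcca_c /= (I0E Hcov Hf1 Hf2 He1 He2 Hdist).
set S := I0 cov f1 eta1 lam1.
case: ifP => // _.
set n := #|S|.
pose e (a : 'I_n) : 'I_(Ntot r) := enum_val a.
have eL : forall a, (e a < Lnum lam1)%N.
  by move=> a; have := enum_valP a; rewrite inE => /andP [].
pose sv (a : 'I_n) := ss V cov f1 f2 eta1 eta2 (e a).
have sv2 : forall a, sv a ^+ 2 = 1 by move=> a; exact: (ss2 Hcov Hf1 Hf2 He1 He2 Hdist _ (eL a)).
pose D : 'M[R]_n := diag_mx (\row_a sv a).
have DT : D^T = D by rewrite tr_diag_mx.
have DD : D *m D = 1%:M.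
  apply/matrixP => a b; rewrite mul_diag_mx !mxE.
  case: (eqVneq a b) => [->|ne]; last by rewrite mulr0n mulr0.
  by rewrite mulr1n -expr2 sv2.
have G2 : (\matrix_(a, b) cov (zvar f2 eta2 (e a) k) (zvar f2 eta2 (e b) k) : 'M_n)
   = D *m (\matrix_(a, b) cov (zvar f1 eta1 (e a) k) (zvar f1 eta1 (e b) k)) *m D.
  apply/matrixP => a b; rewrite mul_mx_diag mul_diag_mx !mxE.
  rewrite (zE Hcov Hf1 Hf2 He1 He2 Hdist _ (eL a)) (zE Hcov Hf1 Hf2 He1 He2 Hdist _ (eL b)).
  by rewrite (covZl Hcov) (covZr Hcov) /sv; ring.
rewrite G2 (mp_pinv_conj _ DT DT DD DD).
set P := mp_pinv _.
apply: eq_bigr => a _; apply: eq_bigr => b _.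
rewrite mul_mx_diag mul_diag_mx !mxE.
rewrite (zE Hcov Hf1 Hf2 He1 He2 Hdist _ (eL a)) (cvarE Hcov Hf1 Hf2 He1 He2 Hdist _ (eL b)).
rewrite (covZr Hcov) scalerA; congr (_ *: _).
rewrite -/(sv a) -/(sv b).
transitivity (cov (x k i) (zvar f1 eta1 (e a) k) * P a b * (sv a ^+ 2 * sv b ^+ 2)).
  by rewrite sv2 sv2; ring.
by ring.
Qed.
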